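(* Let $a\ge 2$ be even, and let $(c,d)\in\mathcal{B}$ with $c\ge 0$ and $c+d\ge 1$. Then $U=\{(a,-a),(c,d)\}\subseteq\mathcal{B}$ is unavoidable.
   Context: The bicyclic inverse semigroup is $\mathcal{B}=\{(a,b)\in\mathbb{Z}\times\mathbb{Z}\mid a\ge 0,\ a+b\ge 0\}$ with multiplication $(a,b)(c,d)=(\max\{c+d,a\}-d,\ b+d)$. A subset $U\subseteq\mathcal{B}$ is called avoidable if $\mathcal{B}$ can be partitioned into two subsets $A$ and $B$ such that no element of $U$ can be written as a product $xy$ of two distinct elements $x\neq y$ both in $A$, or both in $B$. A set is unavoidable if it is not avoidable. *)

(* Defs.v *)
From Stdlib Require Import ZArith.
Open Scope Z_scope.

Definition inB (x : Z * Z) : Prop := 0 <= fst x /\ 0 <= fst x + snd x.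

Definition bmul (x y : Z * Z) : Z * Z :=
  (Z.max (fst y + snd y) (fst x) - snd y, snd x + snd y).

(* U (a subset of B) is avoidable if B can be partitioned into two sets A, B
   (encoded by a colouring col : Z*Z -> bool restricted to B: A = col true,
   B = col false) such that no element of U is a product xy of distinct
   x, y in B of the same colour. *)
Definition avoidable (U : Z * Z -> Prop) : Prop :=
  exists col : Z * Z -> bool,
    forall x y : Z * Z, inB x -> inB y -> x <> y -> col x = col y ->
      ~ U (bmul x y).

Definition unavoidable (U : Z * Z -> Prop) : Prop := ~ avoidable U.

(* Main.v *)
Require Import Defs.
From Stdlib Require Import ZArith Lia.
Open Scope Z_scope.

Theorem lemma3p1 (a c d : Z) :
  2 <= a -> Z.Even a ->
  inB (c, d) -> 0 <= c -> 1 <= c + d ->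
  unavoidable (fun u => u = (a, - a) \/ u = (c, d)).
Proof.
  intros Ha [h Hh] HB Hc Hcd [col Hcol].
  subst a.
  pose (x := (h, - h)). pose (y := (h + 1, - h)). pose (z := (c, h + d)).
  assert (Bx : inB x) by (unfold inB, x; simpl; lia).
  assert (By : inB y) by (unfold inB, y; simpl; lia).
  assert (Bz : inB z) by (unfold inB, z; simpl; lia).
  assert (Pxy : bmul x y = (2 * h, - (2 * h))).
  { unfold bmul, x, y; cbn [fst snd]; f_equal; try match goal with |- context [Z.max ?p ?q] => destruct (Z.max_spec p q) as [[? ->]|[? ->]] end; lia. }
  assert (Pxz : bmul x z = (c, d)).
  { unfold bmul, x, z; cbn [fst snd]; f_equal; try match goal with |- context [Z.max ?p ?q] => destruct (Z.max_spec p q) as [[? ->]|[? ->]] end; lia. }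
  assert (Pyz : bmul y z = (c, d)).
  { unfold bmul, y, z; cbn [fst snd]; f_equal; try match goal with |- context [Z.max ?p ?q] => destruct (Z.max_spec p q) as [[? ->]|[? ->]] end; lia. }
  assert (Nxy : x <> y) by (unfold x, y; intro E; inversion E; lia).
  assert (Nxz : x <> z) by (unfold x, z; intro E; inversion E; lia).
  assert (Nyz : y <> z) by (unfold y, z; intro E; inversion E; lia).
  destruct (col x) eqn:Ex, (col y) eqn:Ey, (col z) eqn:Ez.
  all: first
    [ apply (Hcol x y Bx By Nxy); [congruence | left; exact Pxy]
    | apply (Hcol x z Bx Bz Nxz); [congruence | right; exact Pxz]
    | apply (Hcol y z By Bz Nyz); [congruence | right; exact Pyz] ].
Qed.
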